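(* Let $n\ge0$ and let $f^{n+1}_1,\ldots,f^{n+1}_{n+1}$ be Alpert multiwavelets of multiplicity $n+1$. Let $c$ be the real constant with $f^{n+1}_{n+1}(x)=c\,p_n(x)$ for $x\in(0,1)$. Then for all real $t$, \[ \int_{-1}^1 f^{n+1}_{n+1}(x)e^{ixt}\,dx=2ic\,t^{2n+1}\frac{(-1)^n n!}{(3n+2)!}\,{}_1F_2\!\left(\begin{matrix}n+1\\ \frac{3n+3}2,\,\frac{3n+4}2\end{matrix};-\frac{t^2}4\right). \] If $n\ge1$ and $d$ is the real constant with $f^{n+1}_{n}(x)=d\,q_n(x)$ for $x\in(0,1)$, then for all real $t$, \[ \int_{-1}^1 f^{n+1}_{n}(x)e^{ixt}\,dx=2d\,t^{2n}\frac{(-1)^n n!}{(3n+1)!}\,{}_1F_2\!\left(\begin{matrix}n+1\\ \frac{3n+2}2,\,\frac{3n+3}2\end{matrix};-\frac{t^2}4\right). \]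
   Context: Alpert multiwavelets of multiplicity $N\in\mathbb{N}$: real functions $f^N_1,\ldots,f^N_N$ supported on $[-1,1]$ such that (i) the restriction of each $f^N_i$ to $(0,1)$ is a polynomial of degree at most $N-1$; (ii) $f^N_k(-t)=(-1)^{k+N-1}f^N_k(t)$ for $t\in(0,1)$; (iii) $\int_{-1}^1 f^N_i f^N_j\,dt=\delta_{i,j}$; (iv) $\int_{-1}^1 f^N_k(t)t^i\,dt=0$ for $i=0,\ldots,k+N-2$. (On $(0,1)$, $f^{n+1}_{n+1}$ is a constant multiple of $p_n$ and, for $n\ge1$, $f^{n+1}_n$ is a constant multiple of $q_n$.) Pochhammer symbol: $(a)_0=1$, $(a)_n=a(a+1)\cdots(a+n-1)$; $\binom{n+a}{n}:=\frac{(a+1)_n}{n!}$. $p_n(x)=\sum_{k=0}^n\binom nk\binom{n+\frac k2}{n}(-1)^{n-k}x^k$, $q_n(x)=\sum_{k=0}^n\binom nk\binom{n+\frac{k-1}2}{n}(-1)^{n-k}x^k$. ${}_1F_2(a;b_1,b_2;z)=\sum_{j\ge0}\frac{(a)_j}{(b_1)_j(b_2)_j\,j!}z^j$. *)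

(* Defs.v *)
From Stdlib Require Import Reals Factorial.
Open Scope R_scope.

Fixpoint poch (a : R) (n : nat) : R :=
  match n with
  | O => 1
  | S m => poch a m * (a + INR m)
  end.

(* binom(n + a, n) := (a+1)_n / n! *)
Definition binomR (n : nat) (a : R) : R := poch (a + 1) n / INR (fact n).

Definition p_poly (n : nat) (x : R) : R :=
  sum_f_R0 (fun k => Binomial.C n k * binomR n (INR k / 2)
                     * (-1) ^ (n - k) * x ^ k) n.

Definition q_poly (n : nat) (x : R) : R :=
  sum_f_R0 (fun k => Binomial.C n k * binomR n ((INR k - 1) / 2)
                     * (-1) ^ (n - k) * x ^ k) n.

Definition hyp1F2_term (a b1 b2 z : R) (j : nat) : R :=
  poch a j / (poch b1 j * poch b2 j * INR (fact j)) * z ^ j.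

Definition hyp1F2_is (a b1 b2 z s : R) : Prop :=
  infinite_sum (hyp1F2_term a b1 b2 z) s.

Definition Rint (g : R -> R) (a b v : R) : Prop :=
  exists pr : Riemann_integrable g a b, RiemannInt pr = v.

Definition poly_on_01 (g : R -> R) (d : nat) : Prop :=
  exists c : nat -> R, forall x, 0 < x < 1 -> g x = sum_f_R0 (fun i => c i * x ^ i) d.

Definition alpert (N : nat) (f : nat -> R -> R) : Prop :=
  (forall k, (1 <= k <= N)%nat -> forall x, (x < -1 \/ 1 < x) -> f k x = 0) /\
  (forall k, (1 <= k <= N)%nat -> poly_on_01 (f k) (N - 1)) /\
  (forall k, (1 <= k <= N)%nat -> forall t, 0 < t < 1 ->
      f k (- t) = (-1) ^ (k + N - 1) * f k t) /\
  (forall i j, (1 <= i <= N)%nat -> (1 <= j <= N)%nat ->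
      Rint (fun x => f i x * f j x) (-1) 1 (if Nat.eqb i j then 1 else 0)) /\
  (forall k i, (1 <= k <= N)%nat -> (i <= k + N - 2)%nat ->
      Rint (fun x => f k x * x ^ i) (-1) 1 0).

(* Main.v *)
Require Import Defs.
From Coquelicot Require Import Coquelicot.
From Stdlib Require Import Reals Factorial Lia Lra.
Open Scope R_scope.

Definition Aop (n : nat) (g : R -> R) : R :=
  sum_f_R0 (fun k => Binomial.C n k * (-1) ^ (n - k) * g (INR k)) n.

Lemma C_n_0 n : Binomial.C n 0 = 1.
Proof. unfold Binomial.C. rewrite Nat.sub_0_r. simpl. field. apply INR_fact_neq_0. Qed.

Lemma C_n_n n : Binomial.C n n = 1.
Proof. unfold Binomial.C. rewrite Nat.sub_diag. simpl. field. apply INR_fact_neq_0. Qed.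

Lemma L_Delta n g : Aop (S n) g = Aop n (fun x => g (x + 1) - g x).
Proof.
  unfold Aop.
  destruct n as [|n'].
  - simpl. rewrite !C_n_0. replace (Binomial.C 1 1) with 1 by (symmetry; apply (C_n_n 1)).
    simpl. rewrite Rplus_0_l. ring.
  - rewrite decomp_sum by lia. simpl Init.Nat.pred.
    rewrite C_n_0.
    rewrite (sum_eq _ (fun i => Binomial.C (S n') i * (-1) ^ (S n' - i) * g (INR (S i))
        + (if (i <? S n')%nat then Binomial.C (S n') (S i) else 0) * (-1) ^ (S n' - i) * g (INR (S i)))).
    2:{ intros i Hi. replace (S (S n') - S i)%nat with (S n' - i)%nat by lia.
        destruct (Nat.ltb_spec i (S n')) as [Hlt|Hge].
        - rewrite <- pascal by lia. ring.
        - assert (i = S n') by lia. subst i. rewrite !C_n_n, Nat.sub_diag. ring. }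
    rewrite plus_sum.
    rewrite (tech5 (fun i => (if (i <? S n')%nat then Binomial.C (S n') (S i) else 0) * (-1) ^ (S n' - i) * g (INR (S i))) n').
    destruct (Nat.ltb_spec (S n') (S n')) as [Hl|_]; [lia|].
    rewrite (sum_eq (fun i => (if (i <? S n')%nat then Binomial.C (S n') (S i) else 0) * (-1) ^ (S n' - i) * g (INR (S i)))
       (fun i => - (Binomial.C (S n') (S i) * (-1) ^ (S n' - S i) * g (INR (S i))))).
    2:{ intros i Hi. destruct (Nat.ltb_spec i (S n')) as [_|]; [|lia].
        replace (S n' - i)%nat with (S (S n' - S i)) by lia. simpl pow. ring. }
    rewrite (sum_eq (fun k => Binomial.C (S n') k * (-1)^(S n' - k) * (g (INR k + 1) - g (INR k))) (fun k => Binomial.C (S n') k * (-1)^(S n'-k) * g (INR (S k)) - Binomial.C (S n') k * (-1)^(S n' - k) * g (INR k))) by (intros; rewrite S_INR; ring).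
    rewrite minus_sum.
    rewrite (decomp_sum (fun k => Binomial.C (S n') k * (-1) ^ (S n' - k) * g (INR k)) (S n')) by lia.
    simpl Init.Nat.pred.
    rewrite (sum_eq (fun i => - (Binomial.C (S n') (S i) * (-1) ^ (S n' - S i) * g (INR (S i))))
       (fun i => (Binomial.C (S n') (S i) * (-1) ^ (S n' - S i) * g (INR (S i))) * -1)) by (intros; cbv beta; ring).
    rewrite <- scal_sum.
    rewrite C_n_0. replace (S (S n') - 0)%nat with (S (S n' - 0)) by lia.
    change ((-1) ^ S (S n' - 0)) with (-1 * (-1)^(S n'-0)). ring.
Qed.

Lemma Aop_ext n g h : (forall k, (k <= n)%nat -> g (INR k) = h (INR k)) -> Aop n g = Aop n h.
Proof. intros H. unfold Aop. apply sum_eq. intros i Hi. rewrite H by exact Hi. reflexivity. Qed.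

Lemma Aop_plus n g h : Aop n (fun x => g x + h x) = Aop n g + Aop n h.
Proof. unfold Aop. rewrite <- plus_sum. apply sum_eq. intros; cbv beta; ring. Qed.

Lemma Aop_scal n c g : Aop n (fun x => c * g x) = c * Aop n g.
Proof. unfold Aop. rewrite scal_sum. apply sum_eq. intros; cbv beta; ring. Qed.

Lemma Aop_zero n : Aop n (fun _ => 0) = 0.
Proof. unfold Aop. rewrite (sum_eq _ (fun _ => 0)) by (intros; ring). rewrite sum_cte. ring. Qed.

Inductive Pol : nat -> (R -> R) -> Prop :=
| Pol_const d c : Pol (S d) (fun _ => c)
| Pol_zero d : Pol d (fun _ => 0)
| Pol_mul d g al be : Pol d g -> Pol (S d) (fun x => (al * x + be) * g x)
| Pol_add d g h : Pol d g -> Pol d h -> Pol d (fun x => g x + h x)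
| Pol_ext d g h : (forall x, g x = h x) -> Pol d g -> Pol d h.

Lemma Pol0 d g : Pol d g -> d = 0%nat -> forall x, g x = 0.
Proof.
  induction 1; intros Hd x; try discriminate; auto.
  - rewrite IHPol1, IHPol2 by auto. ring.
  - rewrite <- H. auto.
Qed.

Lemma Pol_shift d g : Pol d g -> forall s, Pol d (fun x => g (x + s)).
Proof.
  induction 1; intros s.
  - apply Pol_const.
  - apply Pol_zero.
  - apply (Pol_ext _ (fun x => (al * x + (al * s + be)) * g (x + s))).
    + intros; cbv beta; ring.
    + apply Pol_mul. auto.
  - apply Pol_add; auto.
  - apply (Pol_ext _ (fun x => g (x + s))); auto.
Qed.

Lemma Pol_scal d g : Pol d g -> forall c, Pol d (fun x => c * g x).
Proof.
  induction 1; intros k.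
  - apply Pol_const.
  - apply (Pol_ext _ (fun _ => 0)). intros; cbv beta; ring. apply Pol_zero.
  - apply (Pol_ext _ (fun x => (al * x + be) * (k * g x))).
    + intros; cbv beta; ring.
    + apply Pol_mul. auto.
  - apply (Pol_ext _ (fun x => k * g x + k * h x)). intros; cbv beta; ring. apply Pol_add; auto.
  - apply (Pol_ext _ (fun x => k * g x)); auto. intros; rewrite H; auto.
Qed.

Lemma Pol_mono d g : Pol d g -> Pol (S d) g.
Proof.
  induction 1.
  - apply Pol_const.
  - apply Pol_zero.
  - apply Pol_mul. auto.
  - apply Pol_add; auto.
  - apply (Pol_ext _ g); auto.
Qed.

Lemma Pol_delta d g : Pol d g -> forall d', d = S d' -> Pol d' (fun x => g (x + 1) - g x).
Proof.
  induction 1; intros d' Hd.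
  - apply (Pol_ext _ (fun _ => 0)). intros; cbv beta; ring. apply Pol_zero.
  - apply (Pol_ext _ (fun _ => 0)). intros; cbv beta; ring. apply Pol_zero.
  - injection Hd as Hd. subst d'. destruct d as [|d''].
    + apply (Pol_ext _ (fun _ => 0)).
      { intros x. rewrite !(Pol0 _ _ H eq_refl). ring. }
      apply Pol_zero.
    + apply (Pol_ext _ (fun x => (al * x + be) * (g (x + 1) - g x) + al * g (x + 1))).
      { intros; cbv beta; ring. }
      apply Pol_add.
      * apply Pol_mul. apply IHPol. reflexivity.
      * apply Pol_scal. apply Pol_shift. exact H.
  - apply (Pol_ext _ (fun x => (g (x + 1) - g x) + (h (x + 1) - h x))).
    { intros; cbv beta; ring. }
    apply Pol_add; auto.
  - apply (Pol_ext _ (fun x => g (x + 1) - g x)). { intros; rewrite !H; auto. } auto.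
Qed.

Lemma Aop_Pol n : forall d g, Pol d g -> (d <= n)%nat -> Aop n g = 0.
Proof.
  induction n as [|n IH]; intros d g Hp Hd.
  - assert (d = 0%nat) by lia. subst d.
    unfold Aop. simpl. rewrite (Pol0 _ _ Hp eq_refl). ring.
  - rewrite L_Delta. destruct d as [|d'].
    + rewrite (Aop_ext _ _ (fun _ => 0)). apply Aop_zero.
      intros k _. rewrite !(Pol0 _ _ Hp eq_refl). ring.
    + apply (IH d'). apply (Pol_delta _ _ Hp). reflexivity. lia.
Qed.

Lemma poch_S_l a r : poch a (S r) = a * poch (a + 1) r.
Proof.
  revert a. induction r as [|r IH]; intros a.
  - simpl. ring.
  - change (poch a (S (S r))) with (poch a (S r) * (a + INR (S r))).
    rewrite IH. rewrite S_INR. change (poch (a+1) (S r)) with (poch (a+1) r * (a + 1 + INR r)). ring.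
Qed.

Lemma Pol_poch al be r : Pol (S r) (fun x => poch (al * x + be) r).
Proof.
  induction r as [|r IH].
  - exact (Pol_const 0 1).
  - apply (Pol_ext _ (fun x => (al * x + (be + INR r)) * poch (al * x + be) r)).
    { intros; simpl; ring. }
    apply Pol_mul. exact IH.
Qed.

Lemma Claim n al be a : (forall k, (k <= n)%nat -> al * INR k + a <> 0) ->
  forall r, (r <= n)%nat ->
  Aop n (fun x => poch (al * x + be) r / (al * x + a)) =
  poch (be - a) r * Aop n (fun x => 1 / (al * x + a)).
Proof.
  intros Hnz r. induction r as [|r IH]; intros Hr.
  - simpl. rewrite Rmult_1_l. reflexivity.
  - rewrite (Aop_ext _ _ (fun x => poch (al * x + be) r + (be + INR r - a) * (poch (al * x + be) r / (al * x + a)))).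
    2:{ intros k Hk. simpl. field. apply Hnz. exact Hk. }
    rewrite Aop_plus, Aop_scal, IH by lia.
    rewrite (Aop_Pol n (S r) _ (Pol_poch al be r)) by lia.
    simpl. ring.
Qed.

Lemma poch_pos a r : 0 < a -> 0 < poch a r.
Proof.
  intros Ha. induction r as [|r IH]; simpl. lra.
  apply Rmult_lt_0_compat. exact IH. pose proof (pos_INR r). lra.
Qed.

Lemma F2 n : forall a, 0 < a ->
  Aop n (fun x => 1 / (x + a)) = (-1) ^ n * INR (fact n) / poch a (S n).
Proof.
  induction n as [|n IH]; intros a Ha.
  - unfold Aop. simpl. rewrite C_n_0. field. lra.
  - rewrite L_Delta.
    rewrite (Aop_ext _ _ (fun x => 1 / (x + (a + 1)) + (-1) * (1 / (x + a)))).
    2:{ intros k _. pose proof (pos_INR k). field. split; lra. }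
    rewrite Aop_plus, Aop_scal, !IH by lra.
    pose proof (poch_pos (a+1) (S n) ltac:(lra)) as H1.
    pose proof (poch_pos a (S n) Ha) as H2.
    change (poch a (S (S n))) with (poch a (S n) * (a + INR (S n))).
    assert (E : poch a (S n) * (a + INR (S n)) = a * poch (a + 1) (S n)).
    { rewrite <- poch_S_l. reflexivity. }
    assert (EQ : poch a (S n) = a * poch (a + 1) (S n) / (a + INR (S n))).
    { rewrite <- E. field. rewrite S_INR. pose proof (pos_INR n). lra. }
    rewrite E, EQ. rewrite fact_simpl, mult_INR. rewrite !S_INR. simpl pow.
    pose proof (pos_INR n). field. split; lra.
Qed.

Lemma mu_gen n m be :
  sum_f_R0 (fun k => Binomial.C n k * (poch (1/2 * INR k + be) n / INR (fact n)) * (-1)^(n-k) / INR (k+m+1)) n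
  = (-1)^n * poch (be - (INR m + 1)/2) n / poch (INR m + 1) (S n).
Proof.
  pose proof (pos_INR m) as Hm.
  assert (Hnz : forall k, (k <= n)%nat -> 1/2 * INR k + (INR m + 1)/2 <> 0).
  { intros k _. pose proof (pos_INR k). lra. }
  transitivity (/ INR (fact n) * (1/2) * Aop n (fun x => poch (1/2 * x + be) n / (1/2 * x + (INR m + 1)/2))).
  { unfold Aop. rewrite !scal_sum. apply sum_eq. intros k Hk.
    rewrite !plus_INR. simpl INR. pose proof (pos_INR k). field.
    split. apply INR_fact_neq_0. lra. }
  rewrite Claim by (auto).
  rewrite (Aop_ext _ _ (fun x => 2 * (1 / (x + (INR m + 1))))).
  2:{ intros k _. pose proof (pos_INR k). field. lra. }
  rewrite Aop_scal, F2 by lra.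
  pose proof (poch_pos (INR m + 1) (S n) ltac:(lra)).
  field. split. lra. apply INR_fact_neq_0.
Qed.

Definition pcp n k := Binomial.C n k * binomR n (INR k / 2) * (-1) ^ (n - k).
Definition pcq n k := Binomial.C n k * binomR n ((INR k - 1) / 2) * (-1) ^ (n - k).
Definition mu (pc : nat -> R) n m := sum_f_R0 (fun k => pc k / INR (k + m + 1)) n.

Lemma mu_p n m : mu (pcp n) n m = (-1)^n * poch (1 - (INR m + 1)/2) n / poch (INR m + 1) (S n).
Proof.
  rewrite <- mu_gen. unfold mu, pcp, binomR. apply sum_eq. intros k _.
  replace (INR k / 2 + 1) with (1/2 * INR k + 1) by field. reflexivity.
Qed.

Lemma mu_q n m : mu (pcq n) n m = (-1)^n * poch (1/2 - (INR m + 1)/2) n / poch (INR m + 1) (S n).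
Proof.
  rewrite <- mu_gen. unfold mu, pcq, binomR. apply sum_eq. intros k _.
  replace ((INR k - 1) / 2 + 1) with (1/2 * INR k + 1/2) by field. reflexivity.
Qed.

Lemma poch_zero j n : (j < n)%nat -> poch (- INR j) n = 0.
Proof.
  induction n as [|n IH]; intros H. lia.
  simpl. destruct (Nat.eq_dec j n) as [->|Hne].
  - ring.
  - rewrite IH by lia. ring.
Qed.

Lemma poch_negint n l : poch (- INR (n + l)) n * INR (fact l) = (-1)^n * INR (fact (n + l)).
Proof.
  induction n as [|n IH].
  - simpl. ring.
  - rewrite poch_S_l.
    replace (- INR (S n + l) + 1) with (- INR (n + l)) by (rewrite !plus_INR, S_INR; ring).
    replace (S n + l)%nat with (S (n + l)) by lia.
    rewrite fact_simpl, mult_INR.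
    transitivity (- INR (S (n + l)) * (poch (- INR (n + l)) n * INR (fact l))). ring.
    rewrite IH. simpl pow. ring.
Qed.

Lemma poch_S a r : poch a (S r) = poch a r * (a + INR r).
Proof. reflexivity. Qed.

Lemma poch_nat c r : poch (INR (S c)) r * INR (fact c) = INR (fact (c + r)).
Proof.
  induction r as [|r IH].
  - simpl. rewrite Nat.add_0_r. ring.
  - rewrite poch_S. replace (c + S r)%nat with (S (c + r)) by lia.
    rewrite fact_simpl, mult_INR, <- IH.
    rewrite !S_INR, plus_INR. ring.
Qed.

Lemma poch_half c l : poch (INR (c+1)/2) l * poch (INR (c+2)/2) l * 4^l * INR (fact c) = INR (fact (c + 2*l)).
Proof.
  induction l as [|l IH].
  - simpl. rewrite Nat.add_0_r. ring.
  - rewrite !poch_S. replace (c + 2 * S l)%nat with (S (S (c + 2 * l))) by lia.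
    rewrite !fact_simpl, !mult_INR, <- IH.
    rewrite !S_INR, !plus_INR, mult_INR. simpl pow. simpl INR. field.
Qed.
Lemma sinPI2 x : sin (x + PI/2) = cos x.
Proof. rewrite sin_plus, sin_PI2, cos_PI2. ring. Qed.

Lemma sin_even a j : sin (a + INR (2 * j) * (PI/2)) = (-1)^j * sin a.
Proof.
  induction j as [|j IH].
  - simpl. rewrite Rmult_0_l, Rplus_0_r. ring.
  - replace (a + INR (2 * S j) * (PI/2)) with ((a + INR (2 * j) * (PI/2)) + PI).
    + rewrite neg_sin, IH. simpl pow. ring.
    + replace (2 * S j)%nat with (S (S (2 * j))) by lia. rewrite !S_INR. field.
Qed.

Lemma sin_odd a j : sin (a + INR (2 * j + 1) * (PI/2)) = (-1)^j * cos a.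
Proof.
  replace (a + INR (2 * j + 1) * (PI/2)) with ((a + PI/2) + INR (2 * j) * (PI/2)).
  - rewrite sin_even, sinPI2. reflexivity.
  - rewrite plus_INR. simpl INR. ring.
Qed.

Lemma Dn_sin s a k : forall z, Derive_n (fun z => sin (s * z + a)) k z = s ^ k * sin (s * z + a + INR k * (PI/2)).
Proof.
  induction k as [|k IH]; intros z.
  - simpl. rewrite Rmult_0_l, Rplus_0_r. ring.
  - simpl Derive_n. rewrite (Derive_ext _ _ _ IH).
    apply is_derive_unique. auto_derive. auto.
    rewrite S_INR. replace (s * z + a + (INR k + 1) * (PI/2)) with ((s * z + a + INR k * (PI/2)) + PI/2) by ring.
    rewrite sinPI2. simpl pow. ring.
Qed.

Lemma exDn_sin s a k z : ex_derive_n (fun z => sin (s * z + a)) k z.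
Proof.
  destruct k as [|k]. simpl. exact I.
  simpl. apply (ex_derive_ext (fun z => s ^ k * sin (s * z + a + INR k * (PI/2)))).
  intros; symmetry; apply Dn_sin. auto_derive. auto.
Qed.

Definition Tay a M y := sum_f_R0 (fun m => y ^ m / INR (fact m) * sin (a + INR m * (PI/2))) M.

Lemma taylor_pos s a M w : 0 < w -> s * s = 1 ->
  Rabs (sin (s * w + a) - sum_f_R0 (fun m => w ^ m / INR (fact m) * (s ^ m * sin (a + INR m * (PI/2)))) M)
   <= w ^ S M / INR (fact (S M)).
Proof.
  intros Hw Hs.
  destruct (Taylor_Lagrange (fun z => sin (s * z + a)) M 0 w Hw) as [z [Hz E]].
  { intros; apply exDn_sin. }
  cbv beta in E. rewrite E.
  rewrite (sum_eq _ (fun m => w ^ m / INR (fact m) * (s ^ m * sin (a + INR m * (PI/2))))).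
  2:{ intros i _. rewrite Dn_sin. rewrite Rminus_0_r. rewrite Rmult_0_r, Rplus_0_l. reflexivity. }
  rewrite Dn_sin, Rminus_0_r.
  replace (sum_f_R0 (fun m => w ^ m / INR (fact m) * (s ^ m * sin (a + INR m * (PI / 2)))) M +
      w ^ S M / INR (fact (S M)) * (s ^ S M * sin (s * z + a + INR (S M) * (PI / 2))) -
      sum_f_R0 (fun m => w ^ m / INR (fact m) * (s ^ m * sin (a + INR m * (PI / 2)))) M)
    with (w ^ S M / INR (fact (S M)) * (s ^ S M * sin (s * z + a + INR (S M) * (PI / 2)))) by ring.
  assert (Hsp : forall k, Rabs (s ^ k) = 1).
  { intros k. rewrite <- RPow_abs. assert (Rabs s = 1).
    { assert (Rabs s * Rabs s = 1) by (rewrite <- Rabs_mult, Hs; apply Rabs_R1).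
      pose proof (Rabs_pos s). nra. }
    rewrite H. apply pow1. }
  rewrite Rabs_mult, Rabs_mult, Hsp.
  assert (0 < w ^ S M / INR (fact (S M))).
  { apply Rdiv_lt_0_compat. apply pow_lt; auto. apply lt_0_INR, lt_O_fact. }
  rewrite (Rabs_right (w ^ S M / INR (fact (S M)))) by lra.
  pose proof (Rabs_le (sin (s * z + a + INR (S M) * (PI / 2))) 1 (SIN_bound _)).
  assert (Rabs (sin (s * z + a + INR (S M) * (PI / 2))) <= 1) by (apply Rabs_le; apply SIN_bound).
  nra.
Qed.

Lemma taylor a M y : Rabs (sin (y + a) - Tay a M y) <= Rabs y ^ S M / INR (fact (S M)).
Proof.
  unfold Tay.
  destruct (Rtotal_order y 0) as [Hn|[H0|Hp]].
  - assert (Hy : 0 < - y) by lra. assert (Hs : -1 * -1 = 1) by ring.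
    pose proof (taylor_pos (-1) a M (-y) Hy Hs) as T.
    replace (-1 * - y) with y in T by ring. rewrite (Rabs_left y) by lra.
    rewrite (sum_eq _ (fun m => (- y) ^ m / INR (fact m) * ((-1) ^ m * sin (a + INR m * (PI / 2))))).
    + exact T.
    + intros i _. replace y with ((-1) * (-y)) at 1 by ring. rewrite Rpow_mult_distr.
      field. apply INR_fact_neq_0.
  - subst y. rewrite Rabs_R0, pow_i by lia. rewrite Rdiv_0_l.
    replace (sum_f_R0 (fun m => 0 ^ m / INR (fact m) * sin (a + INR m * (PI / 2))) M) with (sin (0 + a)).
    + rewrite Rplus_0_l, Rminus_diag_eq, Rabs_R0 by reflexivity. lra.
    + induction M as [|M IH].
      * simpl. replace (0 * (PI/2)) with 0 by ring. rewrite Rplus_0_l, Rplus_0_r. field.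
      * rewrite tech5, <- IH. change (0 ^ S M) with (0 * 0 ^ M). unfold Rdiv. ring.
  - assert (Hs : 1 * 1 = 1) by ring. pose proof (taylor_pos 1 a M y Hp Hs) as T.
    rewrite Rmult_1_l in T. rewrite (Rabs_right y) by lra.
    rewrite (sum_eq _ (fun m => y ^ m / INR (fact m) * (1 ^ m * sin (a + INR m * (PI / 2))))).
    + exact T.
    + intros i _. rewrite pow1. ring.
Qed.
Definition Pf (pc : nat -> R) n x := sum_f_R0 (fun k => pc k * x ^ k) n.

Lemma is_RInt_sumf (F : nat -> R -> R) (v : nat -> R) a b N :
  (forall i, (i <= N)%nat -> is_RInt (F i) a b (v i)) ->
  is_RInt (fun x => sum_f_R0 (fun i => F i x) N) a b (sum_f_R0 v N).
Proof.
  induction N as [|N IH]; intros H.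
  - simpl. apply H. lia.
  - simpl. apply (is_RInt_plus (fun x => sum_f_R0 (fun i => F i x) N) (F (S N))).
    apply IH. intros; apply H; lia. apply H; lia.
Qed.

Lemma is_RInt_mono j : is_RInt (fun x => x ^ j) 0 1 (1 / INR (j + 1)).
Proof.
  assert (H := is_RInt_derive (fun x => x ^ (j + 1) / INR (j + 1)) (fun x => x ^ j) 0 1).
  replace (1 / INR (j + 1)) with (minus (1 ^ (j + 1) / INR (j + 1)) (0 ^ (j + 1) / INR (j + 1))).
  - apply H.
    + intros x _. auto_derive. auto. rewrite Nat.add_1_r. simpl pred. field.
      rewrite <- Nat.add_1_r. apply not_0_INR. lia.
    + intros x _. apply (ex_derive_continuous (fun x0 => x0 ^ j)). auto_derive. auto.
  - rewrite pow1, pow_i by lia. unfold minus, plus, opp; simpl. field.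
    apply not_0_INR. lia.
Qed.

Lemma is_RInt_Pxm pc n m : is_RInt (fun x => Pf pc n x * x ^ m) 0 1 (mu pc n m).
Proof.
  apply (is_RInt_ext (fun x => sum_f_R0 (fun k => pc k * x ^ (k + m)) n)).
  { intros x _. unfold Pf. rewrite (Rmult_comm _ (x ^ m)), scal_sum. apply sum_eq.
    intros; rewrite pow_add; ring. }
  apply is_RInt_sumf. intros i _.
  replace (pc i / INR (i + m + 1)) with (scal (pc i) (1 / INR (i + m + 1))).
  - apply (is_RInt_scal (fun x => x ^ (i + m))). apply is_RInt_mono.
  - unfold scal; simpl; unfold mult; simpl. field. apply not_0_INR. lia.
Qed.

Lemma is_RInt_PT pc n a M t :
  is_RInt (fun x => Pf pc n x * Tay a M (x * t)) 0 1
    (sum_f_R0 (fun m => t ^ m / INR (fact m) * sin (a + INR m * (PI / 2)) * mu pc n m) M).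
Proof.
  apply (is_RInt_ext (fun x => sum_f_R0 (fun m => scal (t ^ m / INR (fact m) * sin (a + INR m * (PI / 2))) (Pf pc n x * x ^ m)) M)).
  { intros x _. unfold Tay. rewrite scal_sum. apply sum_eq. intros i _.
    unfold scal; simpl; unfold mult; simpl. rewrite Rpow_mult_distr. field. apply INR_fact_neq_0. }
  apply is_RInt_sumf. intros i _.
  apply (is_RInt_scal (fun x => Pf pc n x * x ^ i)). apply is_RInt_Pxm.
Qed.

Lemma ex_derive_Pf pc n x : ex_derive (Pf pc n) x.
Proof.
  induction n as [|n IH].
  - unfold Pf. simpl. auto_derive. auto.
  - apply (ex_derive_ext (fun x => Pf pc n x + pc (S n) * x ^ (S n))).
    { intros; reflexivity. }
    apply (ex_derive_plus (Pf pc n) (fun x => pc (S n) * x ^ (S n))). exact IH.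
    auto_derive. auto.
Qed.

Lemma Pf_bound pc n x : 0 <= x <= 1 -> Rabs (Pf pc n x) <= sum_f_R0 (fun k => Rabs (pc k)) n.
Proof.
  intros Hx. unfold Pf. eapply Rle_trans. apply Rsum_abs.
  apply sum_Rle. intros k _. rewrite Rabs_mult.
  assert (Rabs (x ^ k) <= 1).
  { rewrite <- RPow_abs. rewrite <- (pow1 k). apply pow_maj_Rabs. rewrite Rabs_Rabsolu. apply Rabs_le. lra. }
  pose proof (Rabs_pos (pc k)). pose proof (Rabs_pos (x ^ k)). nra.
Qed.

Lemma integral_series pc n a t :
  infinite_sum (fun m => t ^ m / INR (fact m) * sin (a + INR m * (PI / 2)) * mu pc n m)
    (RInt (fun x => Pf pc n x * sin (x * t + a)) 0 1).
Proof.
  set (B := sum_f_R0 (fun k => Rabs (pc k)) n).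
  assert (HB : 0 <= B).
  { unfold B. clear. induction n; simpl. apply Rabs_pos. pose proof (Rabs_pos (pc (S n))). lra. }
  set (I := RInt (fun x => Pf pc n x * sin (x * t + a)) 0 1).
  assert (HI : is_RInt (fun x => Pf pc n x * sin (x * t + a)) 0 1 I).
  { unfold I. apply (RInt_correct (V := R_CompleteNormedModule)). apply ex_RInt_continuous. intros z _.
    apply (ex_derive_continuous (fun x => Pf pc n x * sin (x * t + a))).
    apply ex_derive_mult. apply ex_derive_Pf. auto_derive. auto. }
  intros eps Heps.
  destruct (cv_speed_pow_fact (Rabs t) (eps / (B + 1)) ltac:(apply Rdiv_lt_0_compat; lra)) as [N HN].
  exists N. intros M HM.
  assert (Hb : Rabs t ^ S M / INR (fact (S M)) < eps / (B + 1)).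
  { specialize (HN (S M) ltac:(lia)). unfold R_dist in HN. rewrite Rminus_0_r in HN.
    eapply Rle_lt_trans; [apply Rle_abs|exact HN]. }
  set (Ss := sum_f_R0 (fun m => t ^ m / INR (fact m) * sin (a + INR m * (PI / 2)) * mu pc n m) M).
  pose proof (is_RInt_minus _ _ _ _ _ _ HI (is_RInt_PT pc n a M t)) as HD.
  fold Ss in HD. cbv beta in HD.
  assert (Hex : ex_RInt (fun y => minus (Pf pc n y * sin (y * t + a)) (Pf pc n y * Tay a M (y * t))) 0 1)
    by (eexists; exact HD).
  pose proof (abs_RInt_le_const _ 0 1 (B * (Rabs t ^ S M / INR (fact (S M)))) ltac:(lra) Hex) as Hle.

  unfold R_dist.
  assert (Hf : forall x, 0 <= x <= 1 -> Rabs (minus (Pf pc n x * sin (x * t + a)) (Pf pc n x * Tay a M (x * t))) <= B * (Rabs t ^ S M / INR (fact (S M)))).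
  { intros x Hx. change (minus (Pf pc n x * sin (x*t+a)) (Pf pc n x * Tay a M (x*t))) with (Pf pc n x * sin (x*t+a) - Pf pc n x * Tay a M (x*t)).
    replace (Pf pc n x * sin (x * t + a) - Pf pc n x * Tay a M (x * t))
      with (Pf pc n x * (sin (x * t + a) - Tay a M (x * t))) by ring.
    rewrite Rabs_mult. apply Rmult_le_compat. apply Rabs_pos. apply Rabs_pos.
    apply Pf_bound; auto.
    eapply Rle_trans. apply taylor.
    apply Rmult_le_compat_r. left; apply Rinv_0_lt_compat, INR_fact_lt_0.
    rewrite Rabs_mult, Rpow_mult_distr.
    assert (Rabs x ^ S M <= 1).
    { rewrite <- (pow1 (S M)). apply pow_maj_Rabs. rewrite Rabs_Rabsolu. apply Rabs_le. lra. }
    pose proof (pow_le (Rabs t) (S M) (Rabs_pos t)). nra. }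
  assert (HU : RInt (fun y => minus (Pf pc n y * sin (y * t + a)) (Pf pc n y * Tay a M (y * t))) 0 1 = I - Ss).
  { apply is_RInt_unique. exact HD. }
  specialize (Hle Hf). rewrite HU in Hle.
  rewrite Rabs_minus_sym.
  eapply Rle_lt_trans. rewrite Rminus_0_r, Rmult_1_l in Hle. exact Hle.
  assert (0 <= Rabs t ^ S M / INR (fact (S M))).
  { apply Rdiv_le_0_compat. apply pow_le, Rabs_pos. apply INR_fact_lt_0. }
  apply (Rle_lt_trans _ (B * (eps / (B + 1)))).
  - apply Rmult_le_compat_l; lra.
  - apply (Rmult_lt_reg_r (B + 1)). lra.
    replace (B * (eps / (B + 1)) * (B + 1)) with (B * eps) by (field; lra). nra.
Qed.

Lemma sum_zero_prefix u m0 : (forall m, (m < m0)%nat -> u m = 0) -> sum_f_R0 u m0 = u m0.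
Proof.
  intros H. destruct m0 as [|k]. reflexivity.
  rewrite tech5. assert (sum_f_R0 u k = 0).
  { assert (forall j, (j <= k)%nat -> sum_f_R0 u j = 0).
    { induction j as [|j IH]; intros Hj. simpl. apply H. lia.
      rewrite tech5, IH, H by lia. ring. }
    auto. }
  lra.
Qed.

Lemma partial_sums u h m0 kap :
  (forall m, (m < m0)%nat -> u m = 0) -> (forall l, u (m0 + 2 * l + 1)%nat = 0) ->
  (forall l, u (m0 + 2 * l)%nat = kap * h l) ->
  forall l, sum_f_R0 u (m0 + 2 * l) = kap * sum_f_R0 h l.
Proof.
  intros H0 H1 H2 l. induction l as [|l IH].
  - simpl. rewrite Nat.add_0_r, sum_zero_prefix by auto. rewrite <- (H2 0%nat). rewrite Nat.add_0_r. reflexivity.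
  - replace (m0 + 2 * S l)%nat with (S (S (m0 + 2 * l))) by lia.
    rewrite !tech5, IH.
    replace (S (m0 + 2 * l)) with (m0 + 2 * l + 1)%nat by lia. rewrite H1.
    replace (S (m0 + 2 * l + 1)) with (m0 + 2 * S l)%nat by lia. rewrite H2. ring.
Qed.

Lemma reindex u h m0 kap I :
  (forall m, (m < m0)%nat -> u m = 0) -> (forall l, u (m0 + 2 * l + 1)%nat = 0) ->
  (forall l, u (m0 + 2 * l)%nat = kap * h l) ->
  infinite_sum u I -> kap <> 0 -> infinite_sum h (I / kap).
Proof.
  intros H0 H1 H2 Hu Hk eps Heps.
  assert (Hk' : 0 < Rabs kap) by (apply Rabs_pos_lt; auto).
  destruct (Hu (eps * Rabs kap) ltac:(nra)) as [N HN].
  exists N. intros l Hl. specialize (HN (m0 + 2 * l)%nat ltac:(lia)).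
  rewrite (partial_sums u h m0 kap H0 H1 H2) in HN.
  unfold R_dist in *.
  replace (kap * sum_f_R0 h l - I) with (kap * (sum_f_R0 h l - I / kap)) in HN by (field; auto).
  rewrite Rabs_mult in HN. nra.
Qed.

Lemma reindex0 u h m0 kap I :
  (forall m, (m < m0)%nat -> u m = 0) -> (forall l, u (m0 + 2 * l + 1)%nat = 0) ->
  (forall l, u (m0 + 2 * l)%nat = kap * h l) ->
  infinite_sum u I -> kap = 0 -> I = 0.
Proof.
  intros H0 H1 H2 Hu Hk.
  destruct (Req_dec I 0) as [|Hne]; auto. exfalso.
  destruct (Hu (Rabs I) ltac:(apply Rabs_pos_lt; auto)) as [N HN].
  specialize (HN (m0 + 2 * N)%nat ltac:(lia)).
  rewrite (partial_sums u h m0 kap H0 H1 H2), Hk in HN.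
  unfold R_dist in HN. rewrite Rmult_0_l, Rminus_0_l, Rabs_Ropp in HN. lra.
Qed.

Lemma hyp0 a b1 b2 : infinite_sum (hyp1F2_term a b1 b2 0) 1.
Proof.
  intros eps Heps. exists 0%nat. intros N _.
  assert (sum_f_R0 (hyp1F2_term a b1 b2 0) N = 1).
  { induction N as [|N IH].
    - unfold hyp1F2_term. simpl. field.
    - rewrite tech5, IH. unfold hyp1F2_term. simpl pow. ring. }
  rewrite H. unfold R_dist. rewrite Rminus_diag_eq, Rabs_R0 by reflexivity. lra.
Qed.

Lemma m1sq n : (-1) ^ n * (-1) ^ n = 1.
Proof. rewrite <- pow_add. replace (n + n)%nat with (2 * n)%nat by lia. rewrite pow_mult. simpl. rewrite Rmult_1_r. replace (-1 * -1) with 1 by ring. apply pow1. Qed.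

Lemma mu_p_val n l : mu (pcp n) n (2 * (n + l) + 1) =
  INR (fact (n + l)) * INR (fact (2 * (n + l) + 1)) / (INR (fact l) * INR (fact (3 * n + 2 + 2 * l))).
Proof.
  rewrite mu_p.
  replace (1 - (INR (2 * (n + l) + 1) + 1) / 2) with (- INR (n + l)) by (rewrite !plus_INR, !mult_INR, ?plus_INR; simpl INR; field).
  replace (INR (2 * (n + l) + 1) + 1) with (INR (S (2 * (n + l) + 1))) by (rewrite S_INR; reflexivity).
  pose proof (poch_negint n l) as E1. pose proof (poch_nat (2 * (n + l) + 1) (S n)) as E2.
  replace (2 * (n + l) + 1 + S n)%nat with (3 * n + 2 + 2 * l)%nat in E2 by lia.
  pose proof (INR_fact_neq_0 l). pose proof (INR_fact_neq_0 (2 * (n + l) + 1)).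
  pose proof (INR_fact_neq_0 (3 * n + 2 + 2 * l)).
  assert (P1 : poch (- INR (n + l)) n = (-1) ^ n * INR (fact (n + l)) / INR (fact l)) by (rewrite <- E1; field; auto).
  assert (P2 : poch (INR (S (2 * (n + l) + 1))) (S n) = INR (fact (3 * n + 2 + 2 * l)) / INR (fact (2 * (n + l) + 1))) by (rewrite <- E2; field; auto).
  rewrite P1, P2. unfold Rdiv. rewrite <- !Rmult_assoc. rewrite m1sq. field. auto.
Qed.

Lemma mu_q_val n l : mu (pcq n) n (2 * (n + l)) =
  INR (fact (n + l)) * INR (fact (2 * (n + l))) / (INR (fact l) * INR (fact (3 * n + 1 + 2 * l))).
Proof.
  rewrite mu_q.
  replace (1/2 - (INR (2 * (n + l)) + 1) / 2) with (- INR (n + l)) by (rewrite !mult_INR, !plus_INR; simpl INR; field).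
  replace (INR (2 * (n + l)) + 1) with (INR (S (2 * (n + l)))) by (rewrite S_INR; reflexivity).
  pose proof (poch_negint n l) as E1. pose proof (poch_nat (2 * (n + l)) (S n)) as E2.
  replace (2 * (n + l) + S n)%nat with (3 * n + 1 + 2 * l)%nat in E2 by lia.
  pose proof (INR_fact_neq_0 l). pose proof (INR_fact_neq_0 (2 * (n + l))).
  pose proof (INR_fact_neq_0 (3 * n + 1 + 2 * l)).
  assert (P1 : poch (- INR (n + l)) n = (-1) ^ n * INR (fact (n + l)) / INR (fact l)) by (rewrite <- E1; field; auto).
  assert (P2 : poch (INR (S (2 * (n + l)))) (S n) = INR (fact (3 * n + 1 + 2 * l)) / INR (fact (2 * (n + l)))) by (rewrite <- E2; field; auto).
  rewrite P1, P2. unfold Rdiv. rewrite <- !Rmult_assoc. rewrite m1sq. field. auto.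
Qed.

Lemma hyp_val a c l t : hyp1F2_term (INR (a + 1)) (INR (c + 1) / 2) (INR (c + 2) / 2) (- t ^ 2 / 4) l
  = INR (fact (a + l)) / INR (fact a) * INR (fact c) / INR (fact (c + 2 * l)) / INR (fact l) * ((-1) ^ l * (t ^ 2) ^ l).
Proof.
  unfold hyp1F2_term.
  pose proof (poch_nat a l) as E1. pose proof (poch_half c l) as E2.
  rewrite Nat.add_1_r.
  pose proof (INR_fact_neq_0 a). pose proof (INR_fact_neq_0 c). pose proof (INR_fact_neq_0 l).
  pose proof (INR_fact_neq_0 (c + 2 * l)).
  assert (H4 : 4 ^ l <> 0) by (apply pow_nonzero; lra).
  assert (P1 : poch (INR (S a)) l = INR (fact (a + l)) / INR (fact a)) by (rewrite <- E1; field; auto).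
  assert (P2 : poch (INR (c + 1) / 2) l * poch (INR (c + 2) / 2) l = INR (fact (c + 2 * l)) / (4 ^ l * INR (fact c))).
  { rewrite <- E2. field. auto. }
  rewrite P1. rewrite P2.
  replace (- t ^ 2 / 4) with ((-1) * (t ^ 2) * / 4) by field.
  rewrite !Rpow_mult_distr, pow_inv. field. repeat split; auto.
Qed.

Definition up n t m := t ^ m / INR (fact m) * sin (0 + INR m * (PI / 2)) * mu (pcp n) n m.
Definition uq n t m := t ^ m / INR (fact m) * sin (PI / 2 + INR m * (PI / 2)) * mu (pcq n) n m.

Lemma up_low n t m : (m < 2 * n + 1)%nat -> up n t m = 0.
Proof.
  intros Hm. unfold up. destruct (even_odd_cor m) as [j [E|E]]; subst m.
  - rewrite sin_even, sin_0. ring.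
  - rewrite mu_p. replace (1 - (INR (S (2 * j)) + 1) / 2) with (- INR j) by (rewrite S_INR, mult_INR; simpl INR; field).
    rewrite poch_zero by lia. unfold Rdiv. ring.
Qed.

Lemma up_odd n t l : up n t (2 * n + 1 + 2 * l + 1) = 0.
Proof.
  unfold up. replace (2 * n + 1 + 2 * l + 1)%nat with (2 * (n + l + 1))%nat by lia.
  rewrite sin_even, sin_0. ring.
Qed.

Lemma up_main n t l : up n t (2 * n + 1 + 2 * l) =
  (t ^ (2 * n + 1) * ((-1) ^ n * INR (fact n) / INR (fact (3 * n + 2)))) *
  hyp1F2_term (INR (n + 1)) (INR (3 * n + 3) / 2) (INR (3 * n + 4) / 2) (- t ^ 2 / 4) l.
Proof.
  unfold up. replace (2 * n + 1 + 2 * l)%nat with (2 * (n + l) + 1)%nat by lia.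
  rewrite sin_odd, cos_0, mu_p_val.
  replace (3 * n + 3)%nat with (3 * n + 2 + 1)%nat by lia.
  replace (3 * n + 4)%nat with (3 * n + 2 + 2)%nat by lia.
  rewrite hyp_val.
  replace (t ^ (2 * (n + l) + 1)) with (t ^ (2 * n + 1) * (t ^ 2) ^ l)
    by (rewrite <- pow_mult, <- pow_add; f_equal; lia).
  rewrite (pow_add (-1) n l).
  pose proof (INR_fact_neq_0 n). pose proof (INR_fact_neq_0 l).
  pose proof (INR_fact_neq_0 (3 * n + 2)). pose proof (INR_fact_neq_0 (3 * n + 2 + 2 * l)).
  pose proof (INR_fact_neq_0 (2 * (n + l) + 1)).
  field. repeat split; auto.
Qed.

Lemma uq_low n t m : (m < 2 * n)%nat -> uq n t m = 0.
Proof.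
  intros Hm. unfold uq. destruct (even_odd_cor m) as [j [E|E]]; subst m.
  - rewrite mu_q. replace (1/2 - (INR (2 * j) + 1) / 2) with (- INR j) by (rewrite mult_INR; simpl INR; field).
    rewrite poch_zero by lia. unfold Rdiv. ring.
  - replace (S (2 * j)) with (2 * j + 1)%nat by lia. rewrite sin_odd, cos_PI2. ring.
Qed.

Lemma uq_odd n t l : uq n t (2 * n + 2 * l + 1) = 0.
Proof.
  unfold uq. replace (2 * n + 2 * l + 1)%nat with (2 * (n + l) + 1)%nat by lia.
  rewrite sin_odd, cos_PI2. ring.
Qed.

Lemma uq_main n t l : uq n t (2 * n + 2 * l) =
  (t ^ (2 * n) * ((-1) ^ n * INR (fact n) / INR (fact (3 * n + 1)))) *
  hyp1F2_term (INR (n + 1)) (INR (3 * n + 2) / 2) (INR (3 * n + 3) / 2) (- t ^ 2 / 4) l.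
Proof.
  unfold uq. replace (2 * n + 2 * l)%nat with (2 * (n + l))%nat by lia.
  rewrite sin_even, sin_PI2, mu_q_val.
  replace (3 * n + 2)%nat with (3 * n + 1 + 1)%nat by lia.
  replace (3 * n + 3)%nat with (3 * n + 1 + 2)%nat by lia.
  rewrite hyp_val.
  replace (t ^ (2 * (n + l))) with (t ^ (2 * n) * (t ^ 2) ^ l)
    by (rewrite <- pow_mult, <- pow_add; f_equal; lia).
  rewrite (pow_add (-1) n l).
  pose proof (INR_fact_neq_0 n). pose proof (INR_fact_neq_0 l).
  pose proof (INR_fact_neq_0 (3 * n + 1)). pose proof (INR_fact_neq_0 (3 * n + 1 + 2 * l)).
  pose proof (INR_fact_neq_0 (2 * (n + l))).
  field. repeat split; auto.
Qed.

Lemma to_Rint g a b v : is_RInt g a b v -> Rint g a b v.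
Proof.
  intros H. unfold Rint.
  assert (Hex : ex_RInt g a b) by (exists v; exact H).
  exists (ex_RInt_Reals_0 _ _ _ Hex). rewrite <- RInt_Reals. apply is_RInt_unique. exact H.
Qed.

Lemma glue g h tau J :
  (forall x, 0 < x < 1 -> g x = h x) -> (forall x, 0 < x < 1 -> g (- x) = tau * h x) ->
  is_RInt h 0 1 J -> is_RInt g (-1) 1 (tau * J + J).
Proof.
  intros E1 E2 HJ.
  pose proof (is_RInt_opp _ _ _ _ (is_RInt_scal h 0 1 tau J HJ)) as H1.
  pose proof (is_RInt_swap _ _ _ _ H1) as H2.
  assert (H2' : is_RInt (fun y => opp (scal tau (h y))) (- -1) (- 0) (opp (opp (scal tau J)))).
  { replace (- -1) with 1 by ring. replace (-0) with 0 by ring. exact H2. }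
  pose proof (is_RInt_comp_opp _ _ _ _ H2') as H3.
  assert (H4 : is_RInt g (-1) 0 (tau * J)).
  { apply (is_RInt_ext (fun y => opp (opp (scal tau (h (- y)))))).
    - intros x Hx. rewrite Rmin_left in Hx by lra. rewrite Rmax_right in Hx by lra.
      replace x with (- - x) at 2 by ring. rewrite E2 by lra.
      unfold opp, scal; simpl. unfold mult; simpl. ring.
    - replace (tau * J) with (opp (opp (scal tau J))). exact H3.
      unfold opp, scal; simpl. unfold mult; simpl. ring. }
  assert (H5 : is_RInt g 0 1 J).
  { apply (is_RInt_ext h). intros x Hx. rewrite Rmin_left in Hx by lra. rewrite Rmax_right in Hx by lra.
    symmetry. apply E1. lra. exact HJ. }
  exact (is_RInt_Chasles _ _ _ _ _ _ H4 H5).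
Qed.

Lemma isRInt_h c pc n t a :
  is_RInt (fun x => c * (Pf pc n x * sin (x * t + a))) 0 1 (c * RInt (fun x => Pf pc n x * sin (x * t + a)) 0 1).
Proof.
  apply (is_RInt_scal (fun x => Pf pc n x * sin (x * t + a))).
  apply (RInt_correct (V := R_CompleteNormedModule)). apply ex_RInt_continuous. intros z _.
  apply (ex_derive_continuous (fun x => Pf pc n x * sin (x * t + a))).
  apply ex_derive_mult. apply ex_derive_Pf. auto_derive. auto.
Qed.

Lemma kap_nz t k n c : t <> 0 -> t ^ k * ((-1) ^ n * INR (fact n) / INR (fact c)) <> 0.
Proof.
  intros Ht. pose proof (INR_fact_neq_0 n). pose proof (INR_fact_neq_0 c).
  assert ((-1) ^ n <> 0) by (apply pow_nonzero; lra).
  assert (t ^ k <> 0) by (apply pow_nonzero; auto).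
  unfold Rdiv. repeat apply Rmult_integral_contrapositive_currified; auto. apply Rinv_neq_0_compat; auto.
Qed.

Lemma m1odd n : (-1) ^ (n + 1 + (n + 1) - 1) = -1.
Proof. replace (n + 1 + (n + 1) - 1)%nat with (S (n + n)) by lia. simpl. rewrite pow_add, m1sq. ring. Qed.

Lemma m1even n : (-1) ^ (n + (n + 1) - 1) = 1.
Proof. replace (n + (n + 1) - 1)%nat with (n + n)%nat by lia. rewrite pow_add, m1sq. ring. Qed.

Lemma final_eq c X Y A : X * Y <> 0 -> 2 * c * X * Y * (A / (X * Y)) = 1 * (c * A) + c * A.
Proof.
  intros H. assert (X <> 0) by (intro E; apply H; rewrite E; ring).
  assert (Y <> 0) by (intro E; apply H; rewrite E; ring). field. auto.
Qed.

Theorem mainTheorem12 (n : nat) (f : nat -> R -> R) :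
  alpert (n + 1) f ->
  (forall c : R, (forall x, 0 < x < 1 -> f (n + 1)%nat x = c * p_poly n x) ->
    forall t : R,
      (* real part of the Fourier integral *)
      Rint (fun x => f (n + 1)%nat x * cos (x * t)) (-1) 1 0 /\
      (* imaginary part *)
      exists F : R,
        hyp1F2_is (INR (n + 1)) (INR (3 * n + 3) / 2) (INR (3 * n + 4) / 2) (- t ^ 2 / 4) F /\
        Rint (fun x => f (n + 1)%nat x * sin (x * t)) (-1) 1
          (2 * c * t ^ (2 * n + 1) * ((-1) ^ n * INR (fact n) / INR (fact (3 * n + 2))) * F)) /\
  ((1 <= n)%nat ->
   forall d : R, (forall x, 0 < x < 1 -> f n x = d * q_poly n x) ->
    forall t : R,
      exists F : R,
        hyp1F2_is (INR (n + 1)) (INR (3 * n + 2) / 2) (INR (3 * n + 3) / 2) (- t ^ 2 / 4) F /\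
        Rint (fun x => f n x * cos (x * t)) (-1) 1
          (2 * d * t ^ (2 * n) * ((-1) ^ n * INR (fact n) / INR (fact (3 * n + 1))) * F) /\
        Rint (fun x => f n x * sin (x * t)) (-1) 1 0).
Proof.
  intros [_ [_ [Hsym _]]]. split.
  - intros c Hc t.
    assert (Hs : forall x, 0 < x < 1 -> f (n + 1)%nat (- x) = - f (n + 1)%nat x).
    { intros x Hx. rewrite Hsym by (auto; lia). rewrite m1odd. ring. }
    split.
    + apply to_Rint.
      replace 0 with (-1 * (c * RInt (fun x => Pf (pcp n) n x * sin (x * t + PI / 2)) 0 1)
                      + c * RInt (fun x => Pf (pcp n) n x * sin (x * t + PI / 2)) 0 1) by ring.
      apply (glue _ (fun x => c * (Pf (pcp n) n x * sin (x * t + PI / 2)))).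
      * intros x Hx. rewrite Hc by auto. rewrite sinPI2. unfold Pf, p_poly, pcp. ring.
      * intros x Hx. rewrite Hs, Hc by auto. rewrite sinPI2.
        replace (- x * t) with (- (x * t)) by ring. rewrite cos_neg. unfold Pf, p_poly, pcp. ring.
      * apply isRInt_h.
    + set (Is := RInt (fun x => Pf (pcp n) n x * sin (x * t + 0)) 0 1).
      assert (Hu : infinite_sum (up n t) Is) by exact (integral_series (pcp n) n 0 t).
      assert (HR : Rint (fun x => f (n + 1)%nat x * sin (x * t)) (-1) 1 (1 * (c * Is) + c * Is)).
      { apply to_Rint. apply (glue _ (fun x => c * (Pf (pcp n) n x * sin (x * t + 0)))).
        * intros x Hx. rewrite Hc by auto. rewrite Rplus_0_r. unfold Pf, p_poly, pcp. ring.
        * intros x Hx. rewrite Hs, Hc by auto. rewrite Rplus_0_r.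
          replace (- x * t) with (- (x * t)) by ring. rewrite sin_neg. unfold Pf, p_poly, pcp. ring.
        * apply isRInt_h. }
      assert (Hlow : forall m, (m < 2 * n + 1)%nat -> up n t m = 0) by (intros; apply up_low; auto).
      pose proof (up_odd n t) as Hodd. pose proof (up_main n t) as Hmain.
      destruct (Req_dec t 0) as [Ht|Ht].
      * exists 1. split.
        -- unfold hyp1F2_is. replace (- t ^ 2 / 4) with 0 by (subst t; field). apply hyp0.
        -- assert (HI0 : Is = 0).
           { apply (reindex0 _ _ _ _ _ Hlow Hodd Hmain Hu). subst t. rewrite pow_i by lia. ring. }
           rewrite HI0 in HR. replace (2 * c * t ^ (2 * n + 1) * ((-1) ^ n * INR (fact n) / INR (fact (3 * n + 2))) * 1)
             with (1 * (c * 0) + c * 0). exact HR. subst t. rewrite pow_i by lia. ring.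
      * pose proof (kap_nz t (2 * n + 1) n (3 * n + 2) Ht) as Hk.
        exists (Is / (t ^ (2 * n + 1) * ((-1) ^ n * INR (fact n) / INR (fact (3 * n + 2))))). split.
        -- exact (reindex _ _ _ _ _ Hlow Hodd Hmain Hu Hk).
        -- rewrite final_eq by exact Hk. exact HR.
  - intros Hn d Hd t.
    assert (Hs : forall x, 0 < x < 1 -> f n (- x) = f n x).
    { intros x Hx. rewrite Hsym by (auto; lia). rewrite m1even. ring. }
    assert (HS : Rint (fun x => f n x * sin (x * t)) (-1) 1 0).
    { apply to_Rint.
      replace 0 with (-1 * (d * RInt (fun x => Pf (pcq n) n x * sin (x * t + 0)) 0 1)
                      + d * RInt (fun x => Pf (pcq n) n x * sin (x * t + 0)) 0 1) by ring.
      apply (glue _ (fun x => d * (Pf (pcq n) n x * sin (x * t + 0)))).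
      * intros x Hx. rewrite Hd by auto. rewrite Rplus_0_r. unfold Pf, q_poly, pcq. ring.
      * intros x Hx. rewrite Hs, Hd by auto. rewrite Rplus_0_r.
        replace (- x * t) with (- (x * t)) by ring. rewrite sin_neg. unfold Pf, q_poly, pcq. ring.
      * apply isRInt_h. }
    set (Ic := RInt (fun x => Pf (pcq n) n x * sin (x * t + PI / 2)) 0 1).
    assert (Hu : infinite_sum (uq n t) Ic) by exact (integral_series (pcq n) n (PI / 2) t).
    assert (HR : Rint (fun x => f n x * cos (x * t)) (-1) 1 (1 * (d * Ic) + d * Ic)).
    { apply to_Rint. apply (glue _ (fun x => d * (Pf (pcq n) n x * sin (x * t + PI / 2)))).
      * intros x Hx. rewrite Hd by auto. rewrite sinPI2. unfold Pf, q_poly, pcq. ring.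
      * intros x Hx. rewrite Hs, Hd by auto. rewrite sinPI2.
        replace (- x * t) with (- (x * t)) by ring. rewrite cos_neg. unfold Pf, q_poly, pcq. ring.
      * apply isRInt_h. }
    assert (Hlow : forall m, (m < 2 * n + 0)%nat -> uq n t m = 0) by (intros; apply uq_low; lia).
    assert (Hodd : forall l, uq n t (2 * n + 0 + 2 * l + 1) = 0)
      by (intros l; rewrite Nat.add_0_r; apply uq_odd).
    assert (Hmain : forall l, uq n t (2 * n + 0 + 2 * l) =
       (t ^ (2 * n) * ((-1) ^ n * INR (fact n) / INR (fact (3 * n + 1)))) *
       hyp1F2_term (INR (n + 1)) (INR (3 * n + 2) / 2) (INR (3 * n + 3) / 2) (- t ^ 2 / 4) l)
      by (intros l; rewrite Nat.add_0_r; apply uq_main).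
    destruct (Req_dec t 0) as [Ht|Ht].
    + exists 1. split; [|split; [|exact HS]].
      * unfold hyp1F2_is. replace (- t ^ 2 / 4) with 0 by (subst t; field). apply hyp0.
      * assert (HI0 : Ic = 0).
        { apply (reindex0 _ _ _ _ _ Hlow Hodd Hmain Hu). subst t. rewrite pow_i by lia. ring. }
        rewrite HI0 in HR. replace (2 * d * t ^ (2 * n) * ((-1) ^ n * INR (fact n) / INR (fact (3 * n + 1))) * 1)
          with (1 * (d * 0) + d * 0). exact HR. subst t. rewrite pow_i by lia. ring.
    + pose proof (kap_nz t (2 * n) n (3 * n + 1) Ht) as Hk.
      exists (Ic / (t ^ (2 * n) * ((-1) ^ n * INR (fact n) / INR (fact (3 * n + 1))))).
      split; [|split; [|exact HS]].
      * exact (reindex _ _ _ _ _ Hlow Hodd Hmain Hu Hk).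
      * rewrite final_eq by exact Hk. exact HR.
Qed.
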